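(* Let $S$ be a poset, $(G_i)_{i\in S}$ a family of impartial games, and $G = S \otimes_i G_i$ their ordered join. Let $T \subseteq S$ be the support of $G$. (1) $G$ is terminating if and only if $T$ is a well partially ordered set and each component $G_i$ ($i\in S$) is terminating. (2) $G$ is short if and only if $T$ is finite and each component $G_i$ ($i \in S$) is short.
   Context: All games are impartial combinatorial games under normal play; a game is determined by its set of options, and $G \to G'$ means $G'$ is an option of $G$. A game is terminating if it admits no infinite sequence of moves, and short if it is terminating and has only finitely many positions (reachable subgames). $\mathbf{0}$ denotes the game with no options. Ordered join: for a poset $S$ and a family $(G_i)_{i\in S}$ of games, $S \otimes_i G_i$ is the game whose options are exactly the ordered joins $S \otimes_i G'_i$ obtained by choosing one $i_0\in S$ and an option $G_{i_0}\to G'_{i_0}$, and setting $G'_i=\mathbf{0}$ for all $i>i_0$ and $G'_i=G_i$ for all other $i\ne i_0$. The support of $S\otimes_i G_i$ is the induced subposet of $S$ consisting of all $i$ with $G_i\neq\mathbf{0}$. A poset is a well partially ordered set (wposet) if every infinite sequence in it contains an infinite ascending subsequence (equivalently, it has no infinite strictly descending chain and no infinite antichain). *)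

(* Defs.v *)
(* Impartial games, possibly non-terminating, modelled as
   coinductive trees whose options are indexed by a type; games are
   identified up to bisimilarity (a game is determined by its set of options). *)
From Stdlib Require Import List ClassicalDescription.
Set Implicit Arguments.

CoInductive game : Type := Game { idx : Type; opt : idx -> game }.

Definition zero : game := Game (fun e : Empty_set => match e with end).

CoInductive bisim : game -> game -> Prop :=
  bisim_intro (G H : game) :
    (forall a : idx G, exists b : idx H, bisim (opt G a) (opt H b)) ->
    (forall b : idx H, exists a : idx G, bisim (opt G a) (opt H b)) ->
    bisim G H.

Definition move (G G' : game) : Prop := exists a : idx G, G' = opt G a.

Definition terminating (G : game) : Prop :=
  ~ exists f : nat -> game, f 0 = G /\ forall n, move (f n) (f (S n)).

Inductive reach (G : game) : game -> Prop :=
| reach_refl : reach G G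
| reach_step H H' : reach G H -> move H H' -> reach G H'.

Definition short (G : game) : Prop :=
  terminating G /\
  exists l : list game, forall H, reach G H -> exists H', In H' l /\ bisim H H'.

Definition is_poset (S : Type) (le : S -> S -> Prop) : Prop :=
  (forall x, le x x) /\
  (forall x y, le x y -> le y x -> x = y) /\
  (forall x y z, le x y -> le y z -> le x z).

Definition join_update (S : Type) (le : S -> S -> Prop) (F : S -> game)
  (i0 : S) (g : game) : S -> game :=
  fun i => if excluded_middle_informative (i = i0) then g
           else if excluded_middle_informative (le i0 i) then zero
           else F i.

CoFixpoint ojoin (S : Type) (le : S -> S -> Prop) (F : S -> game) : game :=
  Game (fun p : {i : S & idx (F i)} =>
          ojoin le (join_update le F (projT1 p) (opt (F (projT1 p)) (projT2 p)))).

Definition support (S : Type) (F : S -> game) (i : S) : Prop := ~ bisim (F i) zero.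

Definition wpo_on (S : Type) (le : S -> S -> Prop) (P : S -> Prop) : Prop :=
  forall f : nat -> S, (forall n, P (f n)) ->
    exists g : nat -> nat, (forall m n, m < n -> g m < g n) /\
      (forall m n, m < n -> le (f (g m)) (f (g n))).

Definition finite_on (S : Type) (P : S -> Prop) : Prop :=
  exists l : list S, forall i, P i -> In i l.

(* Main.v *)
Require Import Defs.
From Stdlib Require Import List Lia Arith Classical ClassicalEpsilon ClassicalDescription.
Import ListNotations.

Definition Rm (X Y : game) : Prop := move Y X.

Lemma cid {A : Type} {P : A -> Prop} : (exists x, P x) -> {x | P x}.
Proof. apply constructive_indefinite_description. Qed.

Lemma dc {A : Type} (P : A -> Prop) (R : A -> A -> Prop) (a0 : A) :
  P a0 -> (forall a, P a -> exists b, P b /\ R a b) ->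
  exists h : nat -> A, h 0 = a0 /\ forall n, P (h n) /\ R (h n) (h (S n)).
Proof.
  intros H0 Hs.
  pose (nx := fun (p : {a | P a}) => match p with exist _ a pa =>
      match cid (Hs a pa) with exist _ b hb => exist P b (proj1 hb) end end).
  pose (hh := fix hh n := match n with 0 => exist P a0 H0 | S n => nx (hh n) end).
  exists (fun n => proj1_sig (hh n)). split; [reflexivity|].
  intro n. split; [apply (proj2_sig (hh n))|].
  change (R (proj1_sig (hh n)) (proj1_sig (nx (hh n)))).
  destruct (hh n) as [a pa]. simpl. destruct (cid (Hs a pa)) as [b hb]. simpl. apply hb.
Qed.

Lemma bisim_refl : forall G, bisim G G.
Proof. cofix CH. intros [I o]. constructor; intro a; exists a; apply CH. Qed.

Lemma bisim_sym : forall G H, bisim G H -> bisim H G.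
Proof. cofix CH. intros G H [G' H' h1 h2]. constructor.
 - intro b. destruct (h2 b) as [a Ha]. exists a. apply CH, Ha.
 - intro a. destruct (h1 a) as [b Hb]. exists b. apply CH, Hb.
Qed.

Lemma bisim_trans : forall G H K, bisim G H -> bisim H K -> bisim G K.
Proof. cofix CH. intros G H K h1 h2. destruct h1 as [G H a1 b1]. destruct h2 as [H K a2 b2].
 constructor.
 - intro a. destruct (a1 a) as [b Hb]. destruct (a2 b) as [c Hc]. exists c. apply CH with (opt H b); assumption.
 - intro c. destruct (b2 c) as [b Hb]. destruct (b1 b) as [a Ha]. exists a. apply CH with (opt H b); assumption.
Qed.

Lemma bisim_inv1 G H : bisim G H -> forall a, exists b, bisim (opt G a) (opt H b).
Proof. intros B; destruct B; assumption. Qed.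
Lemma bisim_inv2 G H : bisim G H -> forall b, exists a, bisim (opt G a) (opt H b).
Proof. intros B; destruct B; assumption. Qed.
Arguments bisim_inv1 {G H}. Arguments bisim_inv2 {G H}.

Lemma bisim_zero X : (idx X -> False) -> bisim X zero.
Proof. intro H. constructor; intro a; [destruct (H a)| destruct a]. Qed.

Lemma zero_bisim X : bisim X zero -> idx X -> False.
Proof. intros B a. destruct (bisim_inv1 B a) as [b _]. destruct b. Qed.

Lemma no_move_zero G : move zero G -> False.
Proof. intros [a _]. destruct a. Qed.

Lemma nz_move X : ~ bisim X zero -> exists g, move X g.
Proof. intro Hs. apply NNPP; intro C. apply Hs. apply bisim_zero. intro a. apply C.
  exists (opt X a). exists a; reflexivity. Qed.

Lemma ju_cases {T : Type} (ord : T -> T -> Prop) (Fm : T -> game) i0 g j :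
  (j = i0 /\ join_update ord Fm i0 g j = g) \/
  (j <> i0 /\ ord i0 j /\ join_update ord Fm i0 g j = zero) \/
  (j <> i0 /\ ~ ord i0 j /\ join_update ord Fm i0 g j = Fm j).
Proof. unfold join_update. destruct (excluded_middle_informative (j = i0)) as [e|e].
  - left; split; [exact e|reflexivity].
  - destruct (excluded_middle_informative (ord i0 j)) as [l|l]; right; [left|right];
    repeat split; assumption. Qed.

Lemma ju_at {T : Type} (ord : T -> T -> Prop) (Fm : T -> game) i g : join_update ord Fm i g i = g.
Proof. unfold join_update. destruct (excluded_middle_informative (i = i)); congruence. Qed.

Lemma move_ojoin {T : Type} (ord : T -> T -> Prop) (Fm : T -> game) i g :
  move (Fm i) g -> move (ojoin ord Fm) (ojoin ord (join_update ord Fm i g)).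
Proof. intros [a ->]. exists (existT (fun i => idx (Fm i)) i a). reflexivity. Qed.

Lemma ojoin_move {T : Type} (ord : T -> T -> Prop) (Fm : T -> game) G' :
  move (ojoin ord Fm) G' -> exists i g, move (Fm i) g /\ G' = ojoin ord (join_update ord Fm i g).
Proof. intros [p ->]. destruct p as [i a]. exists i, (opt (Fm i) a). split; [exists a|]; reflexivity. Qed.

Lemma run_nonterm {T : Type} (ord : T -> T -> Prop) (Fs : nat -> T -> game) :
  (forall n, exists i g, move (Fs n i) g /\ Fs (S n) = join_update ord (Fs n) i g) ->
  ~ terminating (ojoin ord (Fs 0)).
Proof. intros H Hter; apply Hter. exists (fun n => ojoin ord (Fs n)). split; [reflexivity|].
  intro n. destruct (H n) as [i [g [Hm ->]]]. apply move_ojoin; assumption. Qed.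

Fixpoint runf {T : Type} (ord : T -> T -> Prop) (F : T -> game) (c : nat -> T) (g : nat -> game) n :=
  match n with 0 => F | S n => join_update ord (runf ord F c g n) (c n) (g n) end.

Lemma term_comp {T : Type} (ord : T -> T -> Prop) (F : T -> game) i : terminating (ojoin ord F) -> terminating (F i).
Proof.
  intros Ht [h [h0 hm]].
  assert (E : forall n, runf ord F (fun _ => i) (fun n => h (S n)) n i = h n).
  { induction n; simpl; [auto|]. apply ju_at. }
  apply (run_nonterm ord (runf ord F (fun _ => i) (fun n => h (S n)))); [|exact Ht].
  intro n. exists i, (h (S n)). split; [rewrite E; apply hm | reflexivity].
Qed.

Lemma seq_trans {A : Type} (R : A -> A -> Prop) (x : nat -> A) :
 (forall a b c, R a b -> R b c -> R a c) -> (forall n, R (x n) (x (S n))) ->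
 forall m n, m < n -> R (x m) (x n).
Proof. intros Ht Hs m n Hmn. induction Hmn. apply Hs. eapply Ht; [exact IHHmn | apply Hs]. Qed.

Lemma term_wpo {T : Type} (ord : T -> T -> Prop) F : is_poset ord -> terminating (ojoin ord F) -> wpo_on ord (support F).
Proof.
  intros [Hr [Ha Ht]] Hter f Hf.
  destruct (classic (forall N, exists n, N <= n /\ forall m, n < m -> ~ ord (f n) (f m))) as [Hinf | Hfin].
  - exfalso.
    destruct (Hinf 0) as [n0 [_ Hn0]].
    destruct (dc (fun n => forall m, n < m -> ~ ord (f n) (f m)) (fun a b => a < b) n0 Hn0) as [h [h0 hh]].
    { intros a _. destruct (Hinf (S a)) as [b [Hb1 Hb2]]. exists b. split; [exact Hb2 | lia]. }
    set (s := fun k => f (h k)).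
    assert (Hmono : forall m n, m < n -> h m < h n).
    { apply (seq_trans lt h); [intros; lia | intro n; apply hh]. }
    assert (Hbad : forall m n, m < n -> ~ ord (s m) (s n)).
    { intros m n Hmn. apply (proj1 (hh m)). apply Hmono; exact Hmn. }
    assert (Hp : forall k, exists g, move (F (s k)) g) by (intro k; apply nz_move; apply Hf).
    pose (p := fun k => proj1_sig (cid (Hp k))).
    assert (Inv : forall n m, n <= m -> runf ord F s p n (s m) = F (s m)).
    { induction n; intros m Hnm; [reflexivity|]. simpl.
      destruct (ju_cases ord (runf ord F s p n) (s n) (p n) (s m)) as [[E _]|[[E1 [E2 _]]|[_ [_ E]]]].
      - exfalso. apply (Hbad n m); [lia| rewrite E; apply Hr].
      - exfalso; apply (Hbad n m); [lia| exact E2].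
      - rewrite E. apply IHn. lia. }
    apply (run_nonterm ord (runf ord F s p)); [|exact Hter].
    intro n. exists (s n), (p n). split; [|reflexivity]. rewrite Inv by lia.
    unfold p. destruct (cid (Hp n)); simpl; assumption.
  - apply not_all_ex_not in Hfin. destruct Hfin as [N HN].
    assert (HN' : forall n, N <= n -> exists m, n < m /\ ord (f n) (f m)).
    { intros n Hn. apply NNPP. intro C. apply HN. exists n. split; [exact Hn|].
      intros m Hm Hle. apply C. exists m. auto. }
    destruct (dc (fun n => N <= n) (fun a b => a < b /\ ord (f a) (f b)) N (le_n N)) as [h [h0 hh]].
    { intros a Ha0. destruct (HN' a Ha0) as [b [Hb1 Hb2]]. exists b. split; [lia | auto]. }
    exists h. split.
    + apply (seq_trans lt h); [intros; lia | intro n; apply hh].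
    + apply (seq_trans (fun a b => ord (f a) (f b)) h); [intros a b c; apply Ht | intro n; apply hh].
Qed.

Lemma term_acc (X : game) : terminating X -> Acc Rm X.
Proof.
  intro Ht. apply NNPP. intro Hna. apply Ht.
  destruct (dc (fun Y => ~ Acc Rm Y) move X Hna) as [h [h0 hh]].
  { intros a Ha. apply NNPP. intro C. apply Ha. constructor. intros y Hy. apply NNPP. intro Cy.
    apply C. exists y. auto. }
  exists h. split; [auto | intro n; apply hh].
Qed.

Lemma play_run {T : Type} (ord : T -> T -> Prop) (F : T -> game) : ~ terminating (ojoin ord F) ->
  exists Fs : nat -> T -> game, Fs 0 = F /\
    forall n, exists i g, move (Fs n i) g /\ Fs (S n) = join_update ord (Fs n) i g.
Proof.
  intro Hnt. apply NNPP in Hnt. destruct Hnt as [f [f0 fm]].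
  destruct (dc (fun p : nat * (T -> game) => f (fst p) = ojoin ord (snd p))
     (fun p q => fst q = S (fst p) /\ exists i g, move (snd p i) g /\ snd q = join_update ord (snd p) i g)
     (0, F) f0) as [h [h0 hh]].
  { intros [n Fm] Hp. simpl in Hp. pose proof (fm n) as Hm. rewrite Hp in Hm.
    destruct (ojoin_move ord Fm _ Hm) as [i [g [Hg E]]].
    exists (S n, join_update ord Fm i g). simpl. split; [exact E|]. split; [reflexivity|].
    exists i, g. split; auto. }
  exists (fun n => snd (h n)). split; [rewrite h0; reflexivity|].
  intro n. apply (hh n).
Qed.

Lemma run_false {T : Type} (ord : T -> T -> Prop) (F : T -> game) (Fs : nat -> T -> game)
  (c : nat -> T) (g : nat -> game) :
  Fs 0 = F -> (forall n, move (Fs n (c n)) (g n) /\ Fs (S n) = join_update ord (Fs n) (c n) (g n)) ->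
  wpo_on ord (support F) -> (forall i, terminating (F i)) -> False.
Proof.
  intros H0 Hst Hw Ht.
  assert (SC : forall n j, (j = c n /\ Fs (S n) j = g n) \/ (j <> c n /\ ord (c n) j /\ Fs (S n) j = zero)
     \/ (j <> c n /\ ~ ord (c n) j /\ Fs (S n) j = Fs n j)).
  { intros n j. rewrite (proj2 (Hst n)). apply ju_cases. }
  assert (mv : forall n, inhabited (idx (Fs n (c n)))).
  { intro n. destruct (proj1 (Hst n)) as [a _]. exact (inhabits a). }
  assert (Inhab : forall n j, inhabited (idx (Fs n j)) -> inhabited (idx (F j))).
  { induction n; intros j Hi; [rewrite <- H0; exact Hi|].
    destruct (SC n j) as [[E1 E2]|[[_ [_ E]]|[_ [_ E]]]].
    - subst j. apply IHn. apply mv.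
    - rewrite E in Hi. destruct Hi as [[]].
    - rewrite E in Hi. apply IHn, Hi. }
  assert (supp : forall n, support F (c n)).
  { intros n B. destruct (Inhab n (c n) (mv n)) as [a]. exact (zero_bisim _ B a). }
  assert (zpers : forall n j, Fs n j = zero -> forall m, n <= m -> Fs m j = zero).
  { intros n j Hz m Hm. induction Hm; [exact Hz|].
    destruct (SC m j) as [[E1 E2]|[[_ [_ E]]|[_ [_ E]]]].
    - subst j. pose proof (mv m) as M. rewrite IHHm in M. destruct M as [[]].
    - exact E.
    - rewrite E; exact IHHm. }
  destruct (Hw c supp) as [h [Hh1 Hh2]].
  set (x := c (h 0)).
  assert (Hhn : forall n, n <= h n).
  { induction n; [lia|]. pose proof (Hh1 n (S n)). lia. }
  assert (Hsame : forall n, c (h n) = x).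
  { intro n. destruct n as [|n]; [reflexivity|]. apply NNPP; intro Hne.
    assert (lt0 : h 0 < h (S n)) by (apply Hh1; lia).
    assert (lx : ord x (c (h (S n)))) by (apply Hh2; lia).
    destruct (SC (h 0) (c (h (S n)))) as [[E1 E2]|[[_ [_ E]]|[_ [C _]]]].
    - apply Hne. exact E1.
    - pose proof (zpers _ _ E (h (S n)) lt0) as Z. pose proof (mv (h (S n))) as M.
      rewrite Z in M. destruct M as [[]].
    - apply C. exact lx. }
  assert (Hnz : forall m, Fs m x <> zero).
  { intros m Hz. pose proof (zpers m x Hz (h m) (Hhn m)) as Z. pose proof (mv (h m)) as M.
    rewrite Hsame, Z in M. destruct M as [[]]. }
  assert (Hacc : Acc Rm (F x)) by (apply term_acc, Ht).
  assert (Claim : forall X, Acc Rm X -> forall d n, Fs n x = X -> c (n + d) = x -> False).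
  { induction 1 as [X _ IH].
    assert (Moved : forall n, Fs n x = X -> c n = x -> False).
    { intros n Hn Hc. destruct (SC n x) as [[_ E]|[[C _]|[C _]]]; [|congruence|congruence].
      pose proof (proj1 (Hst n)) as Hm. rewrite Hc, Hn in Hm.
      apply (IH (g n) Hm (h (S n) - S n) (S n) E).
      replace (S n + (h (S n) - S n)) with (h (S n)) by (pose proof (Hhn (S n)); lia).
      apply Hsame. }
    intro d. induction d as [|d IHd]; intros n Hn Hc.
    - rewrite Nat.add_0_r in Hc. exact (Moved n Hn Hc).
    - destruct (classic (c n = x)) as [Hcn|Hcn]; [exact (Moved n Hn Hcn)|].
      destruct (SC n x) as [[E _]|[[_ [_ E]]|[_ [_ E]]]].
      + congruence.
      + exact (Hnz _ E).
      + apply (IHd (S n)); [rewrite E; exact Hn|].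
        replace (S n + d) with (n + S d) by lia. exact Hc. }
  apply (Claim (F x) Hacc (h 0) 0); [rewrite H0; reflexivity | reflexivity].
Qed.

Lemma term_back {T : Type} (ord : T -> T -> Prop) (F : T -> game) :
  wpo_on ord (support F) -> (forall i, terminating (F i)) -> terminating (ojoin ord F).
Proof.
  intros Hw Ht Hnt.
  destruct (play_run ord F) as [Fs [H0 Hs]]; [intro C; apply C; exact Hnt|].
  pose (c := fun n => proj1_sig (cid (Hs n))).
  assert (Hs' : forall n, exists g, move (Fs n (c n)) g /\ Fs (S n) = join_update ord (Fs n) (c n) g).
  { intro n. unfold c. destruct (cid (Hs n)) as [i Hi]. exact Hi. }
  pose (g := fun n => proj1_sig (cid (Hs' n))).
  apply (run_false ord F Fs c g H0); auto.
  intro n. unfold g. destruct (cid (Hs' n)) as [gg Hg]. exact Hg.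
Qed.

Inductive path : nat -> game -> game -> Prop :=
| path0 X : path 0 X X
| pathS d X X' Y : move X X' -> path d X' Y -> path (S d) X Y.

Lemma path_snoc d X Y Z : path d X Y -> move Y Z -> path (S d) X Z.
Proof. induction 1; intro HZ. - apply pathS with Z; [exact HZ| constructor]. - apply pathS with X'; auto. Qed.

Lemma reach_path X Y : reach X Y -> exists d, path d X Y.
Proof. induction 1 as [|H H' _ [d Hd] Hm]. - exists 0; constructor. - exists (S d). eapply path_snoc; eauto. Qed.

Lemma reach_cons X X' Y : move X X' -> reach X' Y -> reach X Y.
Proof. intros Hm Hr. induction Hr. - apply reach_step with X; [constructor|exact Hm]. - eapply reach_step; eauto. Qed.

Lemma path_app d1 d2 X Y Z : path d1 X Y -> path d2 Y Z -> path (d1 + d2) X Z.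
Proof. induction 1; intro H2; simpl; auto. apply pathS with X'; auto. Qed.

Lemma noloop X : Acc Rm X -> forall d Y, path (S d) X Y -> bisim Y X -> False.
Proof.
  induction 1 as [X _ IH]. intros d Y Hp Hb.
  inversion Hp as [|d' X0 X1 Y0 Hm Hp' E1 E2 E3]; subst.
  destruct Hm as [a Ea].
  destruct (bisim_inv2 Hb a) as [a0 Hb0].
  apply (IH X1 (ex_intro _ a Ea) d (opt Y a0)).
  - apply path_snoc with Y; [exact Hp'| exists a0; reflexivity].
  - rewrite Ea. exact Hb0.
Qed.

Lemma filter_lt {A : Type} (p : A -> bool) l x : In x l -> p x = false -> length (filter p l) < length l.
Proof.
  assert (Hle : forall l : list A, length (filter p l) <= length l).
  { induction l0; simpl; [lia|]. destruct (p a); simpl; lia. }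
  induction l as [|a l IH]; simpl; intros Hin Hp; [contradiction|].
  destruct Hin as [<-|Hin].
  - rewrite Hp. pose proof (Hle l). lia.
  - destruct (p a); simpl; pose proof (IH Hin Hp); lia.
Qed.

Lemma bound n : forall l X, length l <= n -> Acc Rm X ->
  (forall H, reach X H -> exists e, In e l /\ bisim H e) -> forall d Y, path d X Y -> d <= length l.
Proof.
  induction n; intros l X Hl Ha Hc d Y Hp.
  - destruct (Hc X (reach_refl X)) as [e [He _]]. destruct l; [contradiction | simpl in Hl; lia].
  - destruct Hp as [|d X X1 Y Hm Hp]; [lia|].
    set (p := fun e => if excluded_middle_informative (bisim X e) then false else true).
    destruct (Hc X (reach_refl _)) as [e0 [He0 Hb0]].
    assert (Hlt : length (filter p l) < length l).
    { apply filter_lt with e0; [exact He0|]. unfold p.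
      destruct (excluded_middle_informative (bisim X e0)); [reflexivity | contradiction]. }
    assert (IHa : d <= length (filter p l)).
    { refine (IHn (filter p l) X1 _ _ _ d Y Hp); [lia | apply (Acc_inv Ha); exact Hm |].
      intros H0 Hr. destruct (Hc H0 (reach_cons _ _ _ Hm Hr)) as [e [He Hbe]].
      exists e; split; [| exact Hbe]. apply filter_In; split; [exact He|]. unfold p.
      destruct (excluded_middle_informative (bisim X e)) as [Hx|]; [|reflexivity]. exfalso.
      destruct (reach_path _ _ Hr) as [d0 Hp0].
      apply (noloop X Ha d0 H0 (pathS _ _ _ _ Hm Hp0)).
      exact (bisim_trans _ _ _ Hbe (bisim_sym _ _ Hx)). }
    lia.
Qed.

Fixpoint bnd (n : nat) (X : game) : Prop :=
  match n with 0 => idx X -> False | S n => forall a : idx X, bnd n (opt X a) end.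

Definition listgame (s : list game) : game := Game (fun p : {k : nat | k < length s} => nth (proj1_sig p) s zero).

Fixpoint subs (l : list game) : list (list game) :=
  match l with [] => [[]] | a :: l => subs l ++ map (cons a) (subs l) end.

Lemma subs_filter p l : In (filter p l) (subs l).
Proof. induction l; simpl; [left; reflexivity|]. destruct (p a); apply in_or_app; [right; apply in_map | left]; auto. Qed.

Fixpoint Lh n := match n with 0 => [zero] | S n => map listgame (subs (Lh n)) end.

Lemma Lh_cover n : forall X, bnd n X -> exists Y, In Y (Lh n) /\ bisim X Y.
Proof.
  induction n; simpl; intros X HX.
  - exists zero. split; [left; reflexivity | apply bisim_zero; exact HX].
  - set (p := fun e => if excluded_middle_informative (exists a, bisim (opt X a) e) then true else false).
    exists (listgame (filter p (Lh n))). split; [apply in_map, subs_filter|].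
    constructor.
    + intro a. destruct (IHn (opt X a) (HX a)) as [e [He Hb]].
      assert (Hin : In e (filter p (Lh n))).
      { apply filter_In. split; [auto|]. unfold p.
        destruct (excluded_middle_informative (exists a, bisim (opt X a) e)) as [|C];
          [reflexivity| exfalso; apply C; eauto]. }
      destruct (In_nth _ _ zero Hin) as [k [Hk Ek]].
      exists (exist (fun k => k < length (filter p (Lh n))) k Hk). simpl. rewrite Ek. exact Hb.
    + intros [k Hk]. simpl. pose proof (nth_In _ zero Hk) as Hin. set (e := nth k _ zero) in *.
      apply filter_In in Hin. destruct Hin as [_ Hp]. unfold p in Hp.
      destruct (excluded_middle_informative (exists a, bisim (opt X a) e)) as [[a Ha]|]; [|discriminate].
      exists a. exact Ha.
Qed.

Lemma paths_bnd n : forall X, (forall d Y, path d X Y -> d <= n) -> bnd n X.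
Proof.
  induction n; intros X H; simpl.
  - intro a. pose proof (H 1 (opt X a) (pathS _ _ _ _ (ex_intro _ a eq_refl) (path0 _))). lia.
  - intro a. apply IHn. intros d Y Hp. pose proof (H (S d) Y (pathS _ _ _ _ (ex_intro _ a eq_refl) Hp)). lia.
Qed.

Lemma short_bound G : short G -> exists N, forall d Y, path d G Y -> d <= N.
Proof.
  intros [Ht [l Hl]]. exists (length l). apply (bound (length l) l G (le_n _) (term_acc _ Ht) Hl).
Qed.

Lemma bounded_short G : terminating G -> (exists N, forall d Y, path d G Y -> d <= N) -> short G.
Proof.
  intros Ht [N HN]. split; [exact Ht|]. exists (Lh N). intros H Hr.
  destruct (reach_path _ _ Hr) as [d0 Hp0]. apply Lh_cover. apply paths_bnd.
  intros d Y Hp. pose proof (HN _ _ (path_app _ _ _ _ _ Hp0 Hp)). lia.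
Qed.

Lemma comp_path {T : Type} (ord : T -> T -> Prop) i d X Y : path d X Y ->
  forall Fm : T -> game, Fm i = X -> exists Z, path d (ojoin ord Fm) Z.
Proof.
  induction 1 as [X|d X X' Y Hm Hp IH]; intros Fm E.
  - exists (ojoin ord Fm). constructor.
  - destruct (IH (join_update ord Fm i X') (ju_at ord Fm i X')) as [Z HZ].
    exists Z. apply pathS with (ojoin ord (join_update ord Fm i X')); [|exact HZ].
    apply move_ojoin. rewrite E. exact Hm.
Qed.

Fixpoint good {T : Type} (ord : T -> T -> Prop) (cs : list T) : Prop :=
  match cs with [] => True | c :: cs' => (forall c', In c' cs' -> ~ ord c c') /\ good ord cs' end.

Lemma chain_path {T : Type} (ord : T -> T -> Prop) (cs : list T) : is_poset ord -> good ord cs ->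
  forall Fm : T -> game, (forall c, In c cs -> exists g, move (Fm c) g) ->
  exists Y, path (length cs) (ojoin ord Fm) Y.
Proof.
  intros [Hr _]. induction cs as [|c cs IH]; intros Hg Fm Hm.
  - exists (ojoin ord Fm); constructor.
  - destruct Hg as [Hg1 Hg2]. destruct (Hm c (or_introl eq_refl)) as [g Hgm].
    destruct (IH Hg2 (join_update ord Fm c g)) as [Y HY].
    { intros c' Hc'. destruct (ju_cases ord Fm c g c') as [[E _]|[[_ [L _]]|[_ [_ E]]]].
      - exfalso. apply (Hg1 c' Hc'). rewrite E. apply Hr.
      - exfalso. exact (Hg1 c' Hc' L).
      - rewrite E. apply Hm. right; exact Hc'. }
    exists Y. simpl. apply pathS with (ojoin ord (join_update ord Fm c g)); [apply move_ojoin; exact Hgm| exact HY].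
Qed.

Fixpoint pref {A : Type} (pk : list A -> A) n := match n with 0 => [] | S n => pk (pref pk n) :: pref pk n end.
Fixpoint desc {A : Type} (j : nat -> A) n := match n with 0 => [] | S n => j n :: desc j n end.

Lemma desc_len {A : Type} (j : nat -> A) n : length (desc j n) = n.
Proof. induction n; simpl; auto. Qed.
Lemma desc_in {A : Type} (j : nat -> A) n c : In c (desc j n) -> exists b, b < n /\ c = j b.
Proof. induction n; simpl; [intros []|]. intros [E|H]; [exists n; split; auto|]. 
  destruct (IHn H) as [b [Hb E]]. exists b; split; [lia|auto]. Qed.

Lemma short_finite {T : Type} (ord : T -> T -> Prop) (F : T -> game) : is_poset ord ->
  short (ojoin ord F) -> finite_on (support F).
Proof.
  intros Hp Hs. destruct (short_bound _ Hs) as [N HN]. apply NNPP; intro Hnf.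
  assert (Hnew : forall l : list T, exists i, support F i /\ ~ In i l).
  { intro l. apply NNPP; intro C. apply Hnf. exists l. intros i Hi. apply NNPP; intro Hn. apply C. exists i; auto. }
  pose (pk := fun l => proj1_sig (cid (Hnew l))).
  assert (Hpk : forall l, support F (pk l) /\ ~ In (pk l) l).
  { intro l. unfold pk. destruct (cid (Hnew l)); simpl; auto. }
  pose (s := fun n => pk (pref pk n)).
  assert (pref_in : forall m n, m < n -> In (s m) (pref pk n)).
  { intros m n Hmn. induction Hmn; simpl; [left; reflexivity| right; exact IHHmn]. }
  assert (dist : forall m n, m < n -> s m <> s n).
  { intros m n Hmn E. apply (proj2 (Hpk (pref pk n))). fold (s n). rewrite <- E. apply pref_in, Hmn. }
  destruct (term_wpo ord F Hp (proj1 Hs) s (fun n => proj1 (Hpk _))) as [h [Hh1 Hh2]].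
  pose (j := fun k => s (h k)).
  destruct Hp as [Hr [Ha Ht]].
  assert (Hgood : forall n, good ord (desc j n)).
  { induction n; simpl; [exact I|]. split; [|exact IHn].
    intros c' Hc' Hle. destruct (desc_in j n c' Hc') as [b [Hb ->]].
    assert (L2 : ord (j b) (j n)) by (apply Hh2; exact Hb).
    apply (dist (h b) (h n)); [apply Hh1; exact Hb|]. apply Ha; assumption. }
  destruct (chain_path ord (desc j (S N)) (conj Hr (conj Ha Ht)) (Hgood (S N)) F) as [Y HY].
  { intros c Hc. destruct (desc_in j _ c Hc) as [b [_ ->]]. apply nz_move. apply (proj1 (Hpk _)). }
  rewrite desc_len in HY. pose proof (HN _ _ HY). lia.
Qed.

Lemma short_comp {T : Type} (ord : T -> T -> Prop) (F : T -> game) i :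
  short (ojoin ord F) -> short (F i).
Proof.
  intro Hs. apply bounded_short; [apply (term_comp ord F i (proj1 Hs))|].
  destruct (short_bound _ Hs) as [N HN]. exists N. intros d Y Hp.
  destruct (comp_path ord i d (F i) Y Hp F eq_refl) as [Z HZ]. exact (HN _ _ HZ).
Qed.

Lemma inf_often {A : Type} (l : list A) : forall f : nat -> A, (forall n, In (f n) l) ->
  exists x, forall N, exists n, N <= n /\ f n = x.
Proof.
  induction l as [|a l IHl]; intros f Hf; [destruct (Hf 0)|].
  destruct (classic (forall N, exists n, N <= n /\ f n = a)) as [H|H]; [exists a; auto|].
  apply not_all_ex_not in H. destruct H as [N HN].
  destruct (IHl (fun n => f (n + N))) as [x Hx].
  { intro n. destruct (Hf (n+N)) as [E|E]; [|auto]. exfalso; apply HN; exists (n+N); split; [lia| auto]. }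
  exists x. intro M. destruct (Hx M) as [n [Hn E]]. exists (n+N); split; [lia|auto].
Qed.

Lemma finite_wpo {T : Type} (ord : T -> T -> Prop) (P : T -> Prop) : is_poset ord -> finite_on P -> wpo_on ord P.
Proof.
  intros [Hr _] [l Hl] f Hf.
  destruct (inf_often l f (fun n => Hl _ (Hf n))) as [x Hx].
  destruct (Hx 0) as [n0 [_ E0]].
  destruct (dc (fun n => f n = x) (fun a b => a < b) n0 E0) as [h [h0 hh]].
  { intros a _. destruct (Hx (S a)) as [b [Hb E]]. exists b; split; [auto|lia]. }
  exists h. split.
  - apply (seq_trans lt h); [intros; lia | intro n; apply hh].
  - intros m n _. rewrite (proj1 (hh m)), (proj1 (hh n)). apply Hr.
Qed.

Lemma reach_inv {T : Type} (ord : T -> T -> Prop) (F : T -> game) H : reach (ojoin ord F) H ->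
  exists Fm, H = ojoin ord Fm /\ forall j, Fm j = zero \/ reach (F j) (Fm j).
Proof.
  induction 1 as [|H H' Hr IH Hm].
  - exists F; split; auto; intro j; right; constructor.
  - destruct IH as [Fm [-> HFm]].
    destruct (ojoin_move ord Fm _ Hm) as [i [g [Hg ->]]]. exists (join_update ord Fm i g).
    split; [reflexivity|]. intro j.
    destruct (ju_cases ord Fm i g j) as [[-> E]|[[_ [_ E]]|[_ [_ E]]]]; rewrite E.
    + destruct (HFm i) as [Z|R].
      * rewrite Z in Hg. destruct (no_move_zero _ Hg).
      * right. eapply reach_step; eauto.
    + left; reflexivity.
    + apply HFm.
Qed.

Lemma ju_bisim {T : Type} (ord : T -> T -> Prop) (F1 F2 : T -> game) i g1 g2 :
  (forall j, bisim (F1 j) (F2 j)) -> bisim g1 g2 ->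
  forall j, bisim (join_update ord F1 i g1 j) (join_update ord F2 i g2 j).
Proof. intros HF Hg j. unfold join_update.
  destruct (excluded_middle_informative (j = i)); [auto|].
  destruct (excluded_middle_informative (ord i j)); [apply bisim_refl|auto]. Qed.

Lemma ojoin_bisim {T : Type} (ord : T -> T -> Prop) : forall (F1 F2 : T -> game),
  (forall j, bisim (F1 j) (F2 j)) -> bisim (ojoin ord F1) (ojoin ord F2).
Proof.
  cofix CH. intros F1 F2 HF. constructor.
  - intros [i a]. destruct (bisim_inv1 (HF i) a) as [b Hb].
    exists (existT (fun i => idx (F2 i)) i b). simpl. apply CH. apply ju_bisim; auto.
  - intros [i b]. destruct (bisim_inv2 (HF i) b) as [a Ha].
    exists (existT (fun i => idx (F1 i)) i a). simpl. apply CH. apply ju_bisim; auto.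
Qed.

Definition upd {T : Type} (Fm : T -> game) (j : T) (x : game) : T -> game :=
  fun k => if excluded_middle_informative (k = j) then x else Fm k.

Fixpoint fams {T : Type} (L : T -> list game) (ls : list T) : list (T -> game) :=
  match ls with
  | [] => [fun _ => zero]
  | j :: ls => flat_map (fun Fm => map (upd Fm j) (zero :: L j)) (fams L ls)
  end.

Lemma fams_cover {T : Type} (L : T -> list game) ls : forall Fm : T -> game,
  (forall j, In j ls -> exists x, In x (zero :: L j) /\ bisim (Fm j) x) ->
  exists Fm', In Fm' (fams L ls) /\ forall j, (In j ls -> bisim (Fm j) (Fm' j)) /\ (~ In j ls -> Fm' j = zero).
Proof.
  induction ls as [|j0 ls IH]; intros Fm HFm.
  - exists (fun _ => zero). split; [left; reflexivity|]. intro j; split; [intros []|reflexivity].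
  - destruct (IH Fm (fun j Hj => HFm j (or_intror Hj))) as [Fm' [Hin HF']].
    destruct (HFm j0 (or_introl eq_refl)) as [x [Hx Hbx]].
    exists (upd Fm' j0 x). split.
    + apply in_flat_map. exists Fm'. split; auto. apply in_map. exact Hx.
    + intro j. unfold upd. destruct (excluded_middle_informative (j = j0)) as [->|Hne].
      * split; [auto| intro C; exfalso; apply C; left; reflexivity].
      * split.
        -- intros [E|Hj]; [congruence| apply HF'; auto].
        -- intro Hn. apply HF'. intro; apply Hn; right; auto.
Qed.

Lemma reach_nomove X Y : (idx X -> False) -> reach X Y -> Y = X.
Proof. intros E Hr. induction Hr as [|H H' Hr IH Hm]; auto. subst. destruct Hm as [a _]. destruct (E a). Qed.

Lemma short_back {T : Type} (ord : T -> T -> Prop) (F : T -> game) : is_poset ord ->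
  finite_on (support F) -> (forall i, short (F i)) -> short (ojoin ord F).
Proof.
  intros Hp Hf Hs. split.
  { apply term_back; [apply finite_wpo; auto | intro i; apply (proj1 (Hs i))]. }
  destruct Hf as [ls Hls].
  pose (L := fun j => proj1_sig (cid (proj2 (Hs j)))).
  assert (HL : forall j H, reach (F j) H -> exists H', In H' (L j) /\ bisim H H').
  { intro j. unfold L. destruct (cid (proj2 (Hs j))) as [l Hl]. simpl. exact Hl. }
  exists (map (ojoin ord) (fams L ls)). intros H Hr.
  destruct (reach_inv ord F H Hr) as [Fm [-> HFm]].
  destruct (fams_cover L ls Fm) as [Fm' [Hin HF']].
  { intros j Hj. destruct (HFm j) as [Z|R].
    - exists zero; split; [left; reflexivity| rewrite Z; apply bisim_refl].
    - destruct (HL j _ R) as [H' [? ?]]. exists H'; split; [right; auto| auto]. }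
  exists (ojoin ord Fm'). split; [apply in_map; auto|]. apply ojoin_bisim. intro j.
  destruct (classic (In j ls)) as [Hj|Hj]; [apply HF'; auto|].
  rewrite (proj2 (HF' j) Hj).
  assert (Hns : bisim (F j) zero) by (apply NNPP; intro C; apply Hj; apply Hls; exact C).
  destruct (HFm j) as [Z|R]; [rewrite Z; apply bisim_refl|].
  rewrite (reach_nomove _ _ (zero_bisim _ Hns) R). exact Hns.
Qed.

Theorem mainTheorem1 (S : Type) (le : S -> S -> Prop) (F : S -> game) :
  is_poset le ->
  (terminating (ojoin le F) <->
     (wpo_on le (support F) /\ forall i : S, terminating (F i))) /\
  (short (ojoin le F) <->
     (finite_on (support F) /\ forall i : S, short (F i))).
Proof.
  intros Hp. split; split.
  - intro Ht. split; [apply (term_wpo le F Hp Ht) | intro i; apply (term_comp le F i Ht)].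
  - intros [Hw Ht]. apply term_back; auto.
  - intro Hs. split; [apply (short_finite le F Hp Hs) | intro i; apply (short_comp le F i Hs)].
  - intros [Hf Hs]. apply short_back; auto.
Qed.
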